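(* Let $x\in\mathbb{R}\setminus\mathbb{Q}$. Then $\gamma(x)=\tau(2x)$, where, for an irrational $y$ with continued fraction convergents $p_n/q_n$ ($n\in\mathbb{N}$), \[\tau(y)=\sup\Big\{\tau : \Big|y-\tfrac{p_n}{q_n}\Big|<\tfrac{1}{q_n^{\tau}} \text{ for infinitely many convergents } \tfrac{p_n}{q_n}\text{ of } y \text{ with } p_n,q_n \text{ not both odd}\Big\},\] \[\gamma(y)=\sup\Big\{\gamma : \Big|y-\tfrac{p_n}{q_n}\Big|<\tfrac{1}{q_n^{\gamma}} \text{ for infinitely many } n\in\mathbb{N} \text{ with } q_n\equiv 0,1,3 \pmod 4\Big\}.\]
   Context: The convergents $p_n/q_n$ of an irrational number are the (irreducible) partial quotients of its regular continued fraction expansion. *)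

(* Defs.v *)
From Stdlib Require Import Reals ZArith.
From Coquelicot Require Import Coquelicot.
Open Scope R_scope.

Definition irrational (y : R) : Prop :=
  ~ (exists (p q : Z), (q > 0)%Z /\ y = IZR p / IZR q).

(* floor: Int_part r = up r - 1 is the floor of r *)
Fixpoint cf_rem (y : R) (n : nat) : R :=
  match n with
  | O => y
  | S m => / (cf_rem y m - IZR (Int_part (cf_rem y m)))
  end.

Definition cf_a (y : R) (n : nat) : Z := Int_part (cf_rem y n).

(* ((p_n, q_n), (p_{n-1}, q_{n-1})) with p_{-1} = 1, q_{-1} = 0 *)
Fixpoint cf_pq (y : R) (n : nat) : (Z * Z) * (Z * Z) :=
  match n with
  | O => ((cf_a y 0, 1%Z), (1%Z, 0%Z))
  | S m =>
      let '((p, q), (p', q')) := cf_pq y m in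
      let a := cf_a y (S m) in
      (((a * p + p')%Z, (a * q + q')%Z), (p, q))
  end.

Definition cf_p (y : R) (n : nat) : Z := fst (fst (cf_pq y n)).
Definition cf_q (y : R) (n : nat) : Z := snd (fst (cf_pq y n)).

Definition infinitely_often (P : nat -> Prop) : Prop :=
  forall N : nat, exists n : nat, (N <= n)%nat /\ P n.

Definition cf_approx (y t : R) (n : nat) : Prop :=
  Rabs (y - IZR (cf_p y n) / IZR (cf_q y n)) < / Rpower (IZR (cf_q y n)) t.

Definition tau_exp (y : R) : Rbar :=
  Lub_Rbar (fun t : R => infinitely_often (fun n =>
     ~ (Z.odd (cf_p y n) = true /\ Z.odd (cf_q y n) = true) /\ cf_approx y t n)).

Definition gamma_exp (y : R) : Rbar :=
  Lub_Rbar (fun g : R => infinitely_often (fun n =>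
     (Z.modulo (cf_q y n) 4 = 0 \/ Z.modulo (cf_q y n) 4 = 1 \/ Z.modulo (cf_q y n) 4 = 3)%Z
     /\ cf_approx y g n)).

(* Main.v *)
Require Import Defs.
From Stdlib Require Import Reals ZArith Lia Lra Psatz.
From Coquelicot Require Import Coquelicot.
Open Scope R_scope.

Lemma lub_eq_gen (G T : R -> Prop) :
  (forall t, t <= 2 -> G t) -> (forall t, t <= 2 -> T t) ->
  (forall t, G t -> 2 < t -> forall t', t' < t -> T t') ->
  (forall t, T t -> 2 < t -> forall t', t' < t -> G t') ->
  Lub_Rbar G = Lub_Rbar T.
Proof.
  intros HG HT GT TG.
  assert (key : forall A B : R -> Prop, (forall t, t <= 2 -> B t) ->
     (forall t, A t -> 2 < t -> forall t', t' < t -> B t') ->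
     Rbar_le (Lub_Rbar A) (Lub_Rbar B)).
  { intros A B HB AB.
    destruct (Lub_Rbar_correct A) as [_ HA].
    destruct (Lub_Rbar_correct B) as [HBu _].
    apply HA. intros t At.
    destruct (Rle_or_lt t 2) as [h|h].
    - apply HBu, HB, h.
    - destruct (Lub_Rbar B) as [l| |] eqn:E; simpl; auto.
      + apply Rnot_lt_le; intro hl.
        assert (B ((l + t)/2)) by (apply (AB t); auto; lra).
        specialize (HBu _ H). simpl in HBu. lra.
      + assert (B (t - 1)) by (apply (AB t); auto; lra).
        specialize (HBu _ H). simpl in HBu. auto. }
  apply Rbar_le_antisym; apply key; auto.
Qed.


Definition cf_p' (y : R) (n : nat) : Z := fst (snd (cf_pq y n)).
Definition cf_q' (y : R) (n : nat) : Z := snd (snd (cf_pq y n)).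

Lemma cf_p0 y : cf_p y 0 = cf_a y 0. Proof. reflexivity. Qed.
Lemma cf_q0 y : cf_q y 0 = 1%Z. Proof. reflexivity. Qed.
Lemma cf_p'0 y : cf_p' y 0 = 1%Z. Proof. reflexivity. Qed.
Lemma cf_q'0 y : cf_q' y 0 = 0%Z. Proof. reflexivity. Qed.
Lemma cf_pS y n : cf_p y (S n) = (cf_a y (S n) * cf_p y n + cf_p' y n)%Z.
Proof. unfold cf_p, cf_p'; simpl. destruct (cf_pq y n) as [[p q][p' q']]; reflexivity. Qed.
Lemma cf_qS y n : cf_q y (S n) = (cf_a y (S n) * cf_q y n + cf_q' y n)%Z.
Proof. unfold cf_q, cf_q'; simpl. destruct (cf_pq y n) as [[p q][p' q']]; reflexivity. Qed.
Lemma cf_p'S y n : cf_p' y (S n) = cf_p y n.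
Proof. unfold cf_p, cf_p'; simpl. destruct (cf_pq y n) as [[p q][p' q']]; reflexivity. Qed.
Lemma cf_q'S y n : cf_q' y (S n) = cf_q y n.
Proof. unfold cf_q, cf_q'; simpl. destruct (cf_pq y n) as [[p q][p' q']]; reflexivity. Qed.

Lemma cf_remS y n : cf_rem y (S n) = / (cf_rem y n - IZR (cf_a y n)).
Proof. reflexivity. Qed.

Lemma irrat_rem y n : irrational y -> irrational (cf_rem y n).
Proof.
  intros Hy. induction n as [|n IH]; [exact Hy|].
  rewrite cf_remS. intros [p [q [hq E]]]. apply IH.
  set (r := cf_rem y n) in *. set (a := cf_a y n) in *.
  destruct (Req_dec (r - IZR a) 0) as [h0|h0].
  { exists a, 1%Z. split; [lia|]. rewrite Rdiv_1_r. lra. }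
  assert (hp : IZR p <> 0).
  { intro hp. rewrite hp in E. unfold Rdiv in E. rewrite Rmult_0_l in E.
    apply (Rinv_neq_0_compat _ h0). exact E. }
  assert (hq' : IZR q <> 0) by (apply not_0_IZR; lia).
  assert (E2 : r - IZR a = IZR q / IZR p).
  { rewrite <- (Rinv_inv (r - IZR a)), E. field. auto. }
  destruct (Z_lt_le_dec 0 p) as [hp0|hp0].
  - exists (a * p + q)%Z, p. split; [lia|].
    rewrite plus_IZR, mult_IZR. field_simplify_eq; [|auto].
    replace r with (IZR a + IZR q / IZR p) by lra. field. auto.
  - assert (p <> 0)%Z by (intro; subst; apply hp; reflexivity).
    exists (- (a * p + q))%Z, (- p)%Z. split; [lia|].
    rewrite !opp_IZR, plus_IZR, mult_IZR. field_simplify_eq; [|auto].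
    replace r with (IZR a + IZR q / IZR p) by lra. field. auto.
Qed.

Lemma irrat_not_int r : irrational r -> forall z, r <> IZR z.
Proof. intros H z E. apply H. exists z, 1%Z. split; [lia|]. rewrite Rdiv_1_r; auto. Qed.

Lemma frac_pos y n : irrational y ->
  0 < cf_rem y n - IZR (cf_a y n) < 1.
Proof.
  intros Hy. pose proof (irrat_rem y n Hy) as Hr.
  unfold cf_a. destruct (base_Int_part (cf_rem y n)) as [h1 h2].
  pose proof (irrat_not_int _ Hr (Int_part (cf_rem y n))). 
  split; [|lra]. destruct h1 as [h1|h1]; [lra|]. exfalso; auto.
Qed.

Lemma rem_gt1 y n : irrational y -> 1 < cf_rem y (S n).
Proof.
  intros Hy. rewrite cf_remS. pose proof (frac_pos y n Hy).
  rewrite <- Rinv_1. apply Rinv_lt_contravar; lra.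
Qed.

Lemma a_ge1 y n : irrational y -> (1 <= cf_a y (S n))%Z.
Proof.
  intros Hy. pose proof (rem_gt1 y n Hy). unfold cf_a.
  destruct (base_Int_part (cf_rem y (S n))) as [h1 h2].
  assert (0 < IZR (Int_part (cf_rem y (S n)))) by lra.
  apply lt_IZR in H0. lia.
Qed.


Lemma q_facts y n : irrational y ->
  (1 <= cf_q y n)%Z /\ (0 <= cf_q' y n)%Z /\ (cf_q' y n <= cf_q y n)%Z.
Proof.
  intros Hy. induction n as [|n IH].
  - rewrite cf_q0, cf_q'0. lia.
  - rewrite cf_qS, cf_q'S. pose proof (a_ge1 y n Hy). nia.
Qed.

Lemma q_mono y n : irrational y -> (cf_q y n <= cf_q y (S n))%Z.
Proof. intros Hy. rewrite cf_qS. pose proof (q_facts y n Hy). pose proof (a_ge1 y n Hy). nia. Qed.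

Lemma q_mono_le y n m : irrational y -> (n <= m)%nat -> (cf_q y n <= cf_q y m)%Z.
Proof.
  intros Hy H. induction H; [lia|]. pose proof (q_mono y m Hy). lia.
Qed.

Lemma q_ge_n y n : irrational y -> (Z.of_nat n <= cf_q y n)%Z.
Proof.
  intros Hy.
  assert (forall n, (Z.of_nat n <= cf_q y n)%Z /\ (Z.of_nat (S n) <= cf_q y (S n))%Z).
  { clear n. intro n. induction n as [|n IH].
    - rewrite cf_qS, cf_q'0, cf_q0. pose proof (a_ge1 y 0 Hy). simpl. lia.
    - split; [apply IH|]. rewrite cf_qS, cf_q'S. pose proof (a_ge1 y (S n) Hy).
      pose proof (q_facts y n Hy). pose proof (q_facts y (S n) Hy). nia. }
  apply H.
Qed.

Definition cf_D y n := (cf_p y n * cf_q' y n - cf_p' y n * cf_q y n)%Z.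

Lemma D_S y n : cf_D y (S n) = (- cf_D y n)%Z.
Proof. unfold cf_D. rewrite cf_pS, cf_qS, cf_p'S, cf_q'S. ring. Qed.

Lemma D_pm1 y n : cf_D y n = 1%Z \/ cf_D y n = (-1)%Z.
Proof.
  induction n as [|n IH].
  - right. unfold cf_D. rewrite cf_p0, cf_q0, cf_p'0, cf_q'0. ring.
  - rewrite D_S. lia.
Qed.

Lemma key_id y n : irrational y ->
  y * (IZR (cf_q y n) * cf_rem y (S n) + IZR (cf_q' y n))
  = IZR (cf_p y n) * cf_rem y (S n) + IZR (cf_p' y n).
Proof.
  intros Hy. induction n as [|n IH].
  - rewrite cf_q0, cf_q'0, cf_p0, cf_p'0. rewrite cf_remS.
    pose proof (frac_pos y 0 Hy). simpl cf_rem in *. field. lra.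
  - rewrite cf_qS, cf_q'S, cf_pS, cf_p'S. rewrite (cf_remS y (S n)).
    pose proof (frac_pos y (S n) Hy) as hf.
    set (f := cf_rem y (S n) - IZR (cf_a y (S n))) in *.
    assert (E : cf_rem y (S n) = IZR (cf_a y (S n)) + f) by (unfold f; ring).
    rewrite E in IH. rewrite !plus_IZR, !mult_IZR.
    assert (fg : f * / f = 1) by (field; lra).
    set (g := / f) in *.
    set (Q := IZR (cf_q y n)) in *. set (Q' := IZR (cf_q' y n)) in *.
    set (P := IZR (cf_p y n)) in *. set (P' := IZR (cf_p' y n)) in *.
    set (a := IZR (cf_a y (S n))) in *.
    apply Rminus_diag_uniq.
    transitivity (g * (y * (Q * (a + f) + Q') - (P * (a + f) + P')) - y*Q*(f*g-1) + P*(f*g-1)); [ring|].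
    rewrite IH, fg. ring.
Qed.


Definition cf_e y n := y * IZR (cf_q y n) - IZR (cf_p y n).
Definition cf_den y n := IZR (cf_q y n) * cf_rem y (S n) + IZR (cf_q' y n).

Lemma e_den y n : irrational y -> cf_e y n * cf_den y n = - IZR (cf_D y n).
Proof.
  intros Hy. pose proof (key_id y n Hy) as K. unfold cf_e, cf_den, cf_D in *.
  rewrite minus_IZR, !mult_IZR.
  transitivity (IZR (cf_q y n) * (y * (IZR (cf_q y n) * cf_rem y (S n) + IZR (cf_q' y n)))
     - IZR (cf_p y n) * (IZR (cf_q y n) * cf_rem y (S n) + IZR (cf_q' y n))); [ring|].
  rewrite K. ring.
Qed.

Lemma den_gt y n : irrational y -> IZR (cf_q y n) < cf_den y n.
Proof.
  intros Hy. pose proof (q_facts y n Hy) as [h1 [h2 _]]. pose proof (rem_gt1 y n Hy).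
  apply IZR_le in h1. apply IZR_le in h2. unfold cf_den. nra.
Qed.

Lemma e_abs y n : irrational y -> Rabs (cf_e y n) * cf_den y n = 1.
Proof.
  intros Hy. pose proof (den_gt y n Hy). pose proof (q_facts y n Hy) as [h1 _].
  apply IZR_le in h1.
  rewrite <- (Rabs_right (cf_den y n)) by lra. rewrite <- Rabs_mult, e_den by auto.
  rewrite Rabs_Ropp. destruct (D_pm1 y n) as [E|E]; rewrite E.
  apply Rabs_R1. change (IZR (-1)) with (-(1)). rewrite Rabs_Ropp. apply Rabs_R1.
Qed.

Lemma e_abs_lt y n : irrational y -> Rabs (cf_e y n) * IZR (cf_q y n) < 1.
Proof.
  intros Hy. pose proof (e_abs y n Hy). pose proof (den_gt y n Hy).
  pose proof (Rabs_pos (cf_e y n)).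
  assert (Rabs (cf_e y n) <> 0) by (intro E; rewrite E in H; lra). nra.
Qed.

Lemma e_nz y n : irrational y -> cf_e y n <> 0.
Proof. intros Hy E. pose proof (e_abs y n Hy). rewrite E, Rabs_R0 in H. lra. Qed.

Lemma e_sign y n : irrational y -> cf_e y n * cf_e y (S n) < 0.
Proof.
  intros Hy. pose proof (e_den y n Hy) as A. pose proof (e_den y (S n) Hy) as B.
  rewrite D_S, opp_IZR in B.
  pose proof (den_gt y n Hy). pose proof (den_gt y (S n) Hy).
  pose proof (q_facts y n Hy) as [h1 _]. pose proof (q_facts y (S n) Hy) as [h2 _].
  apply IZR_le in h1. apply IZR_le in h2.
  assert (0 < cf_den y n * cf_den y (S n)) by nra.
  assert (cf_e y n * cf_e y (S n) * (cf_den y n * cf_den y (S n)) < 0).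
  { replace (cf_e y n * cf_e y (S n) * (cf_den y n * cf_den y (S n))) with
      ((cf_e y n * cf_den y n) * (cf_e y (S n) * cf_den y (S n))) by ring.
    rewrite A, B. destruct (D_pm1 y n) as [E|E]; rewrite E; simpl; lra. }
  nra.
Qed.

Lemma conv_bound y n : irrational y ->
  Rabs (y - IZR (cf_p y n) / IZR (cf_q y n)) * (IZR (cf_q y n))^2 < 1.
Proof.
  intros Hy. pose proof (e_abs_lt y n Hy). pose proof (q_facts y n Hy) as [h1 _].
  apply IZR_le in h1.
  replace (y - IZR (cf_p y n) / IZR (cf_q y n)) with (cf_e y n / IZR (cf_q y n))
    by (unfold cf_e; field; lra).
  unfold Rdiv. rewrite Rabs_mult, Rabs_inv, (Rabs_right (IZR (cf_q y n))) by lra.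
  replace (Rabs (cf_e y n) * / IZR (cf_q y n) * IZR (cf_q y n) ^ 2)
    with (Rabs (cf_e y n) * IZR (cf_q y n)) by (field; lra). auto.
Qed.

Lemma best_approx y n (p q : Z) : irrational y ->
  (0 < q)%Z -> (q < cf_q y (S n))%Z ->
  Rabs (cf_e y n) <= Rabs (y * IZR q - IZR p).
Proof.
  intros Hy hq hqn.
  set (p0 := cf_p y n) in *. set (q0 := cf_q y n) in *.
  set (p1 := cf_p y (S n)) in *. set (q1 := cf_q y (S n)) in *.
  pose proof (D_pm1 y (S n)) as HD. unfold cf_D in HD. rewrite cf_p'S, cf_q'S in HD.
  fold p0 q0 p1 q1 in HD.
  set (De := (p1 * q0 - p0 * q1)%Z) in *.
  set (u := (- De * (p * q1 - q * p1))%Z). set (v := (- De * (p0 * q - q0 * p))%Z).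
  assert (DD : (De * De = 1)%Z) by (destruct HD as [E|E]; rewrite E; reflexivity).
  assert (Hp : p = (u * p0 + v * p1)%Z).
  { unfold u, v. transitivity (p * (De * De))%Z; [rewrite DD; ring|]. unfold De; ring. }
  assert (Hq : q = (u * q0 + v * q1)%Z).
  { unfold u, v. transitivity (q * (De * De))%Z; [rewrite DD; ring|]. unfold De; ring. }
  clearbody u v.
  pose proof (q_facts y n Hy) as [h0 _]. pose proof (q_facts y (S n) Hy) as [h1 _].
  fold q0 q1 in h0, h1.
  assert (Ee : y * IZR q - IZR p = IZR u * cf_e y n + IZR v * cf_e y (S n)).
  { rewrite Hp, Hq. unfold cf_e. fold p0 q0 p1 q1. rewrite !plus_IZR, !mult_IZR. ring. }
  rewrite Ee.
  pose proof (e_sign y n Hy) as Hs.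
  destruct (Z.eq_dec v 0) as [v0|v0].
  - rewrite v0, Rmult_0_l, Rplus_0_r. rewrite v0 in Hq.
    assert (1 <= u)%Z by nia. apply IZR_le in H.
    rewrite Rabs_mult, (Rabs_right (IZR u)) by lra.
    pose proof (Rabs_pos (cf_e y n)). nra.
  - destruct (Z.eq_dec u 0) as [u0|u0].
    + exfalso. rewrite u0 in Hq. nia.
    + assert (uv : (u * v < 0)%Z).
      { destruct (Z_lt_le_dec 0 u); destruct (Z_lt_le_dec 0 v); nia. }
      apply IZR_lt in uv. rewrite mult_IZR in uv.
      assert (0 < (IZR u * cf_e y n) * (IZR v * cf_e y (S n))).
      { replace ((IZR u * cf_e y n) * (IZR v * cf_e y (S n))) with
           ((IZR u * IZR v) * (cf_e y n * cf_e y (S n))) by ring. nra. }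
      assert (Rabs (IZR u * cf_e y n) <= Rabs (IZR u * cf_e y n + IZR v * cf_e y (S n))).
      { destruct (Rle_or_lt 0 (IZR u * cf_e y n)).
        - assert (0 <= IZR v * cf_e y (S n)) by nra.
          rewrite !Rabs_right by lra. lra.
        - assert (IZR v * cf_e y (S n) < 0) by nra.
          rewrite !Rabs_left by lra. lra. }
      eapply Rle_trans; [|exact H0].
      rewrite Rabs_mult.
      assert (1 <= Rabs (IZR u)).
      { rewrite <- abs_IZR. apply IZR_le. lia. }
      pose proof (Rabs_pos (cf_e y n)). nra.
Qed.


Lemma find_n y (q : Z) : irrational y -> (1 <= q)%Z ->
  exists n, (cf_q y n <= q)%Z /\ (q < cf_q y (S n))%Z.
Proof.
  intros Hy hq.
  assert (forall N, (q < cf_q y N)%Z -> exists n, (cf_q y n <= q)%Z /\ (q < cf_q y (S n))%Z).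
  { induction N as [|N IH]; intros h.
    - rewrite cf_q0 in h. lia.
    - destruct (Z_lt_le_dec q (cf_q y N)) as [h'|h']; [apply IH; auto|].
      exists N; auto. }
  apply (H (S (Z.to_nat q))). pose proof (q_ge_n y (S (Z.to_nat q)) Hy). lia.
Qed.

Lemma legendre y (p q : Z) : irrational y -> (0 < q)%Z ->
  Rabs (y - IZR p / IZR q) * (2 * IZR q ^ 2) < 1 ->
  exists n k, (0 < k)%Z /\ p = (k * cf_p y n)%Z /\ q = (k * cf_q y n)%Z.
Proof.
  intros Hy hq H.
  destruct (find_n y q Hy ltac:(lia)) as [n [h1 h2]].
  exists n.
  assert (hqR : 0 < IZR q) by (apply IZR_lt; auto).
  assert (A : Rabs (y * IZR q - IZR p) * (2 * IZR q) < 1).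
  { replace (y * IZR q - IZR p) with ((y - IZR p / IZR q) * IZR q) by (field; lra).
    rewrite Rabs_mult, (Rabs_right (IZR q)) by lra. nra. }
  pose proof (best_approx y n p q Hy hq h2) as B.
  pose proof (q_facts y n Hy) as [hqn _].
  assert (E : (p * cf_q y n = cf_p y n * q)%Z).
  { destruct (Z.eq_dec (p * cf_q y n) (cf_p y n * q)) as [e|e]; auto. exfalso.
    assert (1 <= Rabs (IZR (p * cf_q y n - cf_p y n * q))).
    { rewrite <- abs_IZR. apply IZR_le. lia. }
    rewrite minus_IZR, !mult_IZR in H0.
    replace (IZR p * IZR (cf_q y n) - IZR (cf_p y n) * IZR q) with
      (IZR q * cf_e y n - IZR (cf_q y n) * (y * IZR q - IZR p)) in H0 by (unfold cf_e; ring).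
    pose proof (Rabs_triang (IZR q * cf_e y n) (- (IZR (cf_q y n) * (y * IZR q - IZR p)))).
    apply IZR_le in h1. apply IZR_le in hqn.
    assert (r1 : Rabs (IZR q) = IZR q) by (apply Rabs_right; lra).
    assert (r2 : Rabs (IZR (cf_q y n)) = IZR (cf_q y n)) by (apply Rabs_right; lra).
    rewrite Rabs_Ropp, !Rabs_mult, r1, r2 in H1.
    pose proof (Rabs_pos (y * IZR q - IZR p)).
    unfold Rminus at 1 in H0.
    assert (IZR q * Rabs (cf_e y n) <= IZR q * Rabs (y * IZR q - IZR p)) by (apply Rmult_le_compat_l; lra).
    assert (IZR (cf_q y n) * Rabs (y * IZR q - IZR p) <= IZR q * Rabs (y * IZR q - IZR p)) by (apply Rmult_le_compat_r; lra).
    lra. }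
  pose proof (D_pm1 y n) as HD. unfold cf_D in HD.
  set (k := (cf_D y n * (p * cf_q' y n - cf_p' y n * q))%Z).
  assert (Eq : q = (k * cf_q y n)%Z).
  { unfold k. transitivity (q * (cf_D y n * cf_D y n))%Z.
    destruct HD as [e|e]; unfold cf_D; rewrite e; ring.
    transitivity (cf_D y n * (cf_q' y n * (p * cf_q y n) - cf_p' y n * q * cf_q y n))%Z; [| ring].
    rewrite E. unfold cf_D. ring. }
  assert (Ep : p = (k * cf_p y n)%Z).
  { unfold k. transitivity (p * (cf_D y n * cf_D y n))%Z.
    destruct HD as [e|e]; unfold cf_D; rewrite e; ring.
    transitivity (cf_D y n * (p * cf_q' y n * cf_p y n - cf_p' y n * (cf_p y n * q)))%Z; [| ring].
    rewrite <- E. unfold cf_D. ring. }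
  exists k. split; [nia|]. auto.
Qed.


Lemma Rpower_pos x y : 0 < Rpower x y.
Proof. unfold Rpower. apply exp_pos. Qed.

Lemma Rpower_2 x : 0 < x -> Rpower x 2 = x ^ 2.
Proof. intros h. rewrite <- (Rpower_pow 2 x h). replace (INR 2) with 2 by (simpl; ring). reflexivity. Qed.

Lemma eventually_big (eps M : R) : 0 < eps ->
  exists B, 0 < B /\ forall Q, B <= Q -> M <= Rpower Q eps.
Proof.
  intros he. exists (Rpower (Rmax M 1) (/ eps)). split; [apply Rpower_pos|].
  intros Q hQ. pose proof (Rpower_pos (Rmax M 1) (/ eps)).
  eapply Rle_trans; [|apply Rle_Rpower_l; [lra|split; [exact H|exact hQ]]].
  rewrite Rpower_mult, Rinv_l by lra. rewrite Rpower_1. apply Rmax_l.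
  pose proof (Rmax_r M 1). lra.
Qed.

Lemma approx_le2 y n t : irrational y -> t <= 2 -> cf_approx y t n.
Proof.
  intros Hy ht. unfold cf_approx. pose proof (conv_bound y n Hy).
  pose proof (q_facts y n Hy) as [h1 _]. apply IZR_le in h1.
  pose proof (Rle_Rpower (IZR (cf_q y n)) t 2 h1 ht).
  rewrite Rpower_2 in H0 by lra. pose proof (Rpower_pos (IZR (cf_q y n)) t).
  apply (Rmult_lt_reg_r (Rpower (IZR (cf_q y n)) t)); auto.
  rewrite Rinv_l by lra.
  pose proof (Rabs_pos (y - IZR (cf_p y n) / IZR (cf_q y n))). nra.
Qed.

Lemma mod4_2 q : (q mod 4 = 2)%Z -> q = (2 * (2 * (q / 4) + 1))%Z.
Proof. intros h. pose proof (Z.div_mod q 4 ltac:(lia)). lia. Qed.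



Lemma mod4_cases q : (q mod 4 <> 2)%Z ->
  (q mod 4 = 0 \/ q mod 4 = 1 \/ q mod 4 = 3)%Z.
Proof. intros h. pose proof (Z.mod_pos_bound q 4 ltac:(lia)). lia. Qed.

Lemma LB_G x t : irrational x -> t <= 2 ->
  infinitely_often (fun n =>
     (Z.modulo (cf_q x n) 4 = 0 \/ Z.modulo (cf_q x n) 4 = 1 \/ Z.modulo (cf_q x n) 4 = 3)%Z
     /\ cf_approx x t n).
Proof.
  intros Hx ht N.
  destruct (Z.eq_dec (cf_q x N mod 4) 2) as [e|e].
  - exists (S N). split; [lia|]. split; [|apply approx_le2; auto].
    apply mod4_cases. intro e2.
    pose proof (D_pm1 x (S N)) as HD. unfold cf_D in HD. rewrite cf_p'S, cf_q'S in HD.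
    apply mod4_2 in e. apply mod4_2 in e2.
    rewrite e, e2 in HD.
    assert (forall a b c d : Z, (a * (2 * b) - c * (2 * d) = 2 * (a * b - c * d))%Z) by (intros; ring).
    rewrite H in HD. lia.
  - exists N. split; [lia|]. split; [apply mod4_cases; auto|apply approx_le2; auto].
Qed.

Lemma LB_T y t : irrational y -> t <= 2 ->
  infinitely_often (fun n =>
     ~ (Z.odd (cf_p y n) = true /\ Z.odd (cf_q y n) = true) /\ cf_approx y t n).
Proof.
  intros Hy ht N.
  destruct (Bool.bool_dec (andb (Z.odd (cf_p y N)) (Z.odd (cf_q y N))) true) as [e|e].
  - exists (S N). split; [lia|]. split; [|apply approx_le2; auto].
    intros [o1 o2]. apply andb_prop in e. destruct e as [o3 o4].
    pose proof (D_pm1 y (S N)) as HD. unfold cf_D in HD. rewrite cf_p'S, cf_q'S in HD.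
    assert (Z.odd (cf_p y (S N) * cf_q y N - cf_p y N * cf_q y (S N)) = false).
    { rewrite Z.odd_sub, !Z.odd_mul, o1, o2, o3, o4. reflexivity. }
    destruct HD as [E|E]; rewrite E in H; discriminate.
  - exists N. split; [lia|]. split; [|apply approx_le2; auto].
    intros [o1 o2]. apply e. rewrite o1, o2. reflexivity.
Qed.

Lemma irrat2 x : irrational x -> irrational (2 * x).
Proof.
  intros Hx [p [q [hq E]]]. apply Hx. exists p, (2 * q)%Z. split; [lia|].
  rewrite mult_IZR. assert (IZR q <> 0) by (apply not_0_IZR; lia).
  replace x with (2 * x / 2) by field. rewrite E. field. auto.
Qed.


Lemma lt_inv_iff a R : 0 < R -> (a < / R <-> a * R < 1).
Proof.
  intros h. split; intro H.
  - apply (Rmult_lt_compat_r R) in H; auto. rewrite Rinv_l in H; lra.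
  - apply (Rmult_lt_reg_r R); auto. rewrite Rinv_l; lra.
Qed.

Lemma real_GT (a q Q R1 Rt RQ : R) : 0 < Q <= q -> 1 <= q -> a * Rt < 1 -> 0 <= a ->
  4 * R1 <= Rt -> q ^ 2 <= R1 -> 0 < RQ <= R1 ->
  (2 * a) * (2 * Q ^ 2) < 1 /\ (2 * a) * RQ < 1.
Proof.
  intros hQ hq ha ha0 h4 hR hRQ.
  assert (a * (4 * R1) <= a * Rt) by (apply Rmult_le_compat_l; lra).
  assert (Q ^ 2 <= q ^ 2) by (apply pow_incr; lra).
  assert (a * Q^2 <= a * R1) by (apply Rmult_le_compat_l; lra).
  assert (a * RQ <= a * R1) by (apply Rmult_le_compat_l; lra).
  split; nra.
Qed.

Lemma real_TG (b Q q K RQ1 RQt Rq : R) : 1 <= Q <= q -> b * RQt < 1 -> 0 <= b ->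
  2 * K * RQ1 <= RQt -> 0 < RQ1 -> 0 < K -> 0 < Rq <= K * RQ1 -> q ^ 2 <= Rq ->
  (b / 2) * (2 * q ^ 2) < 1 /\ (b / 2) * Rq < 1.
Proof.
  intros hQ hb hb0 hK h1 h2 h3 h4.
  assert (b * (2 * K * RQ1) <= b * RQt) by (apply Rmult_le_compat_l; lra).
  assert (b * Rq <= b * (K * RQ1)) by (apply Rmult_le_compat_l; lra).
  assert (b * q^2 <= b * Rq) by (apply Rmult_le_compat_l; lra).
  split; nra.
Qed.

Lemma pick_n y (A : nat -> Prop) (B : R) (M : Z) : irrational y -> infinitely_often A ->
  forall N, exists n, (N <= n)%nat /\ A n /\ B <= IZR (cf_q y n) /\ (M < cf_q y n)%Z.
Proof.
  intros Hy HA N.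
  destruct (HA (Nat.max N (Nat.max (Z.to_nat (up B)) (S (Z.to_nat M))))) as [n [hn An]].
  exists n. split; [lia|]. split; auto.
  pose proof (q_ge_n y n Hy). destruct (archimed B) as [h1 _].
  split; [|lia].
  assert (up B <= cf_q y n)%Z by lia. apply IZR_le in H0. lra.
Qed.

Lemma finish y (A B : Z) N t' : irrational y -> (0 < B)%Z ->
  (forall k A' B', (0 < k)%Z -> A = (k * A')%Z -> B = (k * B')%Z -> k = 1%Z) ->
  Rabs (y - IZR A / IZR B) * (2 * IZR B ^ 2) < 1 ->
  Rabs (y - IZR A / IZR B) < / Rpower (IZR B) t' ->
  (cf_q y N < B)%Z ->
  exists m, (N <= m)%nat /\ cf_p y m = A /\ cf_q y m = B /\ cf_approx y t' m.
Proof.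
  intros Hy hB Hk HL HC HN.
  destruct (legendre y A B Hy hB HL) as [m [k [hk [EA EB]]]].
  assert (k = 1%Z) by (eapply Hk; eauto). subst k.
  rewrite Z.mul_1_l in EA, EB.
  exists m. split; [|split; [auto|split; [auto|]]].
  - destruct (le_lt_dec N m) as [h|h]; auto. exfalso.
    pose proof (q_mono_le y m N Hy ltac:(lia)). lia.
  - unfold cf_approx. rewrite <- EA, <- EB. auto.
Qed.


Lemma odd_div2 (k w : Z) : (0 < k)%Z -> Z.odd k = true -> (k * w = 2 \/ k * w = -2)%Z -> k = 1%Z.
Proof.
  intros hk ho hw. assert (k <= 2)%Z by (destruct (Z_lt_le_dec 0 w); destruct (Z_lt_le_dec w 0); nia).
  assert (k = 1 \/ k = 2)%Z as [e|e] by lia; auto. subst. discriminate.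
Qed.

Lemma unit_k (k w : Z) : (0 < k)%Z -> (k * w = 1 \/ k * w = -1)%Z -> k = 1%Z.
Proof. intros hk hw. destruct (Z_lt_le_dec 0 w); destruct (Z_lt_le_dec w 0); nia. Qed.

Lemma odd_of_mul k Q : Z.odd (k * Q) = true -> Z.odd k = true.
Proof. rewrite Z.odd_mul. intros h. apply andb_prop in h. tauto. Qed.

Lemma GT x t t' : irrational x -> 2 < t' < t ->
  infinitely_often (fun n =>
     (Z.modulo (cf_q x n) 4 = 0 \/ Z.modulo (cf_q x n) 4 = 1 \/ Z.modulo (cf_q x n) 4 = 3)%Z
     /\ cf_approx x t n) ->
  infinitely_often (fun n =>
     ~ (Z.odd (cf_p (2 * x) n) = true /\ Z.odd (cf_q (2 * x) n) = true) /\ cf_approx (2 * x) t' n).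
Proof.
  intros Hx ht HG N.
  pose proof (irrat2 x Hx) as Hy.
  destruct (eventually_big (t - t') 4 ltac:(lra)) as [B [hB HB]].
  destruct (pick_n x _ B (2 * cf_q (2 * x) N) Hx HG 0) as [n [_ [[Hmod Happ] [hBq hM]]]].
  pose proof (q_facts x n Hx) as [hq1 _].
  pose proof (D_pm1 x n) as HD. unfold cf_D in HD.
  set (p := cf_p x n) in *. set (q := cf_q x n) in *.
  set (p' := cf_p' x n) in *. set (q' := cf_q' x n) in *.
  assert (HPQ : exists P Q : Z, (0 < Q)%Z /\ (Q <= q)%Z /\ (q <= 2 * Q)%Z /\
     IZR P / IZR Q = 2 * (IZR p / IZR q) /\
     (forall k A' B', (0 < k)%Z -> P = (k * A')%Z -> Q = (k * B')%Z -> k = 1%Z) /\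
     ~ (Z.odd P = true /\ Z.odd Q = true)).
  { destruct Hmod as [h0|h13].
    - pose proof (Z.div_mod q 4 ltac:(lia)) as Eq. rewrite h0, Z.add_0_r in Eq.
      set (j := (q / 4)%Z) in *. exists p, (2 * j)%Z.
      split; [lia|]. split; [lia|]. split; [lia|]. split.
      { rewrite Eq, !mult_IZR. assert (IZR j <> 0) by (apply not_0_IZR; lia). field. auto. }
      split.
      + intros k A' B' hk EP EQ. apply (unit_k k (A' * q' - 2 * p' * B')); auto.
        rewrite <- (Z.mul_1_r 1), <- (Z.mul_1_r (-1)). 
        replace (k * (A' * q' - 2 * p' * B'))%Z with (p * q' - p' * q)%Z; [lia|].
        rewrite Eq, EP. replace (4 * j)%Z with (2 * (2 * j))%Z by ring. rewrite EQ. ring.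
      + rewrite Z.odd_mul. simpl. intros [_ h]; discriminate.
    - assert (hodd : Z.odd q = true).
      { pose proof (Zmod_odd q). destruct (Z.odd q); auto.
        pose proof (Z.div_mod q 4 ltac:(lia)). pose proof (Z.div_mod q 2 ltac:(lia)). lia. }
      exists (2 * p)%Z, q. split; [lia|]. split; [lia|]. split; [lia|]. split.
      { rewrite mult_IZR. assert (IZR q <> 0) by (apply not_0_IZR; lia). field. auto. }
      split.
      + intros k A' B' hk EP EQ. apply (odd_div2 k (A' * q' - 2 * p' * B')); auto.
        { rewrite EQ in hodd. eapply odd_of_mul; eauto. }
        replace (k * (A' * q' - 2 * p' * B'))%Z with (2 * (p * q' - p' * q))%Z; [lia|].
        replace (2 * (p * q' - p' * q))%Z with ((2 * p) * q' - 2 * p' * q)%Z by ring.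
        rewrite EP, EQ. ring.
      + rewrite Z.odd_mul. simpl. intros [h _]; discriminate. }
  destruct HPQ as [P [Q [hQ [hQq [hqQ [Hrat [Hk Hpar]]]]]]].
  assert (hqR : 1 <= IZR q) by (apply IZR_le; lia).
  assert (hQR : 0 < IZR Q) by (apply IZR_lt; lia).
  assert (hQqR : IZR Q <= IZR q) by (apply IZR_le; lia).
  assert (E : Rabs (2 * x - IZR P / IZR Q) = 2 * Rabs (x - IZR p / IZR q)).
  { rewrite Hrat. replace (2 * x - 2 * (IZR p / IZR q)) with (2 * (x - IZR p / IZR q)) by ring.
    rewrite Rabs_mult, Rabs_right by lra. reflexivity. }
  unfold cf_approx in Happ. fold p q in Happ.
  apply lt_inv_iff in Happ; [|apply Rpower_pos].
  assert (H4 : 4 * Rpower (IZR q) t' <= Rpower (IZR q) t).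
  { assert (Rpower (IZR q) t = Rpower (IZR q) (t - t') * Rpower (IZR q) t') as ->
      by (rewrite <- Rpower_plus; f_equal; ring).
    apply Rmult_le_compat_r; [pose proof (Rpower_pos (IZR q) t'); lra|]. apply HB. auto. }
  assert (H2 : IZR q ^ 2 <= Rpower (IZR q) t').
  { rewrite <- Rpower_2 by lra. apply Rle_Rpower; lra. }
  assert (HQ1 : 0 < Rpower (IZR Q) t' <= Rpower (IZR q) t').
  { split; [apply Rpower_pos|]. apply Rle_Rpower_l; lra. }
  destruct (real_GT (Rabs (x - IZR p / IZR q)) (IZR q) (IZR Q) (Rpower (IZR q) t')
     (Rpower (IZR q) t) (Rpower (IZR Q) t') ltac:(lra) hqR Happ (Rabs_pos _) H4 H2 HQ1) as [L C].
  rewrite <- E in L, C.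
  destruct (finish (2 * x) P Q N t' Hy hQ Hk L) as [m [hm [EP [EQ Hap]]]].
  { apply lt_inv_iff; auto. apply Rpower_pos. }
  { lia. }
  exists m. split; auto. split; auto. rewrite EP, EQ. auto.
Qed.


Lemma TG x t t' : irrational x -> 2 < t' < t ->
  infinitely_often (fun n =>
     ~ (Z.odd (cf_p (2 * x) n) = true /\ Z.odd (cf_q (2 * x) n) = true) /\ cf_approx (2 * x) t n) ->
  infinitely_often (fun n =>
     (Z.modulo (cf_q x n) 4 = 0 \/ Z.modulo (cf_q x n) 4 = 1 \/ Z.modulo (cf_q x n) 4 = 3)%Z
     /\ cf_approx x t' n).
Proof.
  intros Hx ht HT N.
  pose proof (irrat2 x Hx) as Hy.
  set (K := Rpower 2 t').
  assert (hK : 0 < K) by apply Rpower_pos.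
  destruct (eventually_big (t - t') (2 * K) ltac:(lra)) as [B [hB HB]].
  destruct (pick_n (2 * x) _ B (cf_q x N) Hy HT 0) as [m [_ [[Hpar Happ] [hBQ hM]]]].
  pose proof (q_facts (2 * x) m Hy) as [hQ1 _].
  pose proof (D_pm1 (2 * x) m) as HD. unfold cf_D in HD.
  set (P := cf_p (2 * x) m) in *. set (Q := cf_q (2 * x) m) in *.
  set (P' := cf_p' (2 * x) m) in *. set (Q' := cf_q' (2 * x) m) in *.
  assert (Hpq : exists p q : Z, (0 < q)%Z /\ (Q <= q)%Z /\ (q <= 2 * Q)%Z /\
     IZR p / IZR q = (IZR P / IZR Q) / 2 /\
     (forall k A' B', (0 < k)%Z -> p = (k * A')%Z -> q = (k * B')%Z -> k = 1%Z) /\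
     (q mod 4 = 0 \/ q mod 4 = 1 \/ q mod 4 = 3)%Z).
  { destruct (Z.odd P) eqn:oP.
    - assert (oQ : Z.odd Q = false) by (destruct (Z.odd Q); auto; exfalso; auto).
      pose proof (Zmod_odd Q) as mQ. rewrite oQ in mQ.
      pose proof (Z.div_mod Q 2 ltac:(lia)) as EQ2. rewrite mQ, Z.add_0_r in EQ2.
      exists P, (2 * Q)%Z. split; [lia|]. split; [lia|]. split; [lia|]. split.
      { rewrite mult_IZR. assert (IZR Q <> 0) by (apply not_0_IZR; lia). field. auto. }
      split.
      + intros k A' B' hk EP EQ. apply (odd_div2 k (2 * A' * Q' - P' * B')); auto.
        { rewrite EP in oP. eapply odd_of_mul; eauto. }
        replace (k * (2 * A' * Q' - P' * B'))%Z with (2 * (P * Q' - P' * Q))%Z; [lia|].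
        replace (2 * (P * Q' - P' * Q))%Z with (2 * P * Q' - P' * (2 * Q))%Z by ring.
        rewrite EQ, EP. ring.
      + left. rewrite EQ2. replace (2 * (2 * (Q / 2)))%Z with ((Q / 2) * 4)%Z by ring.
        apply Z.mod_mul. lia.
    - pose proof (Zmod_odd P) as mP. rewrite oP in mP.
      pose proof (Z.div_mod P 2 ltac:(lia)) as EP2. rewrite mP, Z.add_0_r in EP2.
      set (h := (P / 2)%Z) in *.
      assert (oQ : Z.odd Q = true).
      { destruct (Z.odd Q) eqn:oQ; auto. exfalso.
        pose proof (Zmod_odd Q) as mQ. rewrite oQ in mQ.
        pose proof (Z.div_mod Q 2 ltac:(lia)) as EQ2. rewrite mQ, Z.add_0_r in EQ2.
        rewrite EP2, EQ2 in HD.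
        assert (forall a b c d : Z, (2 * a * b - c * (2 * d) = 2 * (a * b - c * d))%Z) by (intros; ring).
        rewrite H in HD. lia. }
      exists h, Q. split; [lia|]. split; [lia|]. split; [lia|]. split.
      { rewrite EP2, mult_IZR. assert (IZR Q <> 0) by (apply not_0_IZR; lia). field. auto. }
      split.
      + intros k A' B' hk EP EQ. apply (unit_k k (2 * A' * Q' - P' * B')); auto.
        replace (k * (2 * A' * Q' - P' * B'))%Z with (P * Q' - P' * Q)%Z; [lia|].
        rewrite EP2, EP, EQ. ring.
      + pose proof (Zmod_odd Q) as mQ. rewrite oQ in mQ.
        pose proof (Z.div_mod Q 4 ltac:(lia)). pose proof (Z.div_mod Q 2 ltac:(lia)).
        pose proof (Z.mod_pos_bound Q 4 ltac:(lia)). lia. }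
  destruct Hpq as [p [q [hq [hQq [hqQ [Hrat [Hk Hmod]]]]]]].
  assert (hQR : 1 <= IZR Q) by (apply IZR_le; lia).
  assert (hqR : 0 < IZR q) by (apply IZR_lt; lia).
  assert (hQqR : IZR Q <= IZR q) by (apply IZR_le; lia).
  assert (hqQR : IZR q <= 2 * IZR Q) by (rewrite <- mult_IZR; apply IZR_le; lia).
  assert (E : Rabs (x - IZR p / IZR q) = Rabs (2 * x - IZR P / IZR Q) / 2).
  { rewrite Hrat. replace (x - IZR P / IZR Q / 2) with ((2 * x - IZR P / IZR Q) / 2) by (field; lra).
    unfold Rdiv. rewrite Rabs_mult, Rabs_inv, (Rabs_right 2) by lra. reflexivity. }
  unfold cf_approx in Happ. fold P Q in Happ.
  apply lt_inv_iff in Happ; [|apply Rpower_pos].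
  assert (H4 : 2 * K * Rpower (IZR Q) t' <= Rpower (IZR Q) t).
  { assert (Rpower (IZR Q) t = Rpower (IZR Q) (t - t') * Rpower (IZR Q) t') as ->
      by (rewrite <- Rpower_plus; f_equal; ring).
    apply Rmult_le_compat_r; [pose proof (Rpower_pos (IZR Q) t'); lra|]. apply HB. auto. }
  assert (H2 : IZR q ^ 2 <= Rpower (IZR q) t').
  { rewrite <- Rpower_2 by lra. apply Rle_Rpower; lra. }
  assert (Hq1 : 0 < Rpower (IZR q) t' <= K * Rpower (IZR Q) t').
  { split; [apply Rpower_pos|]. unfold K. rewrite Rpower_mult_distr by lra.
    apply Rle_Rpower_l; lra. }
  destruct (real_TG (Rabs (2 * x - IZR P / IZR Q)) (IZR Q) (IZR q) K (Rpower (IZR Q) t')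
     (Rpower (IZR Q) t) (Rpower (IZR q) t') ltac:(lra) Happ (Rabs_pos _) H4
     (Rpower_pos _ _) hK Hq1 H2) as [L C].
  rewrite <- E in L, C.
  destruct (finish x p q N t' Hx hq Hk L) as [n [hn [Ep [Eq Hap]]]].
  { apply lt_inv_iff; auto. apply Rpower_pos. }
  { lia. }
  exists n. split; auto. split; auto. rewrite Eq. auto.
Qed.


Theorem lemma3p1 (x : R) (hx : irrational x) :
  gamma_exp x = tau_exp (2 * x).
Proof.
  unfold gamma_exp, tau_exp. apply lub_eq_gen.
  - intros t ht. apply LB_G; auto.
  - intros t ht. apply LB_T; auto. apply irrat2; auto.
  - intros t Gt ht t' ht'. destruct (Rle_or_lt t' 2) as [h|h].
    + apply LB_T; auto. apply irrat2; auto.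
    + apply (GT x t t'); auto.
  - intros t Tt ht t' ht'. destruct (Rle_or_lt t' 2) as [h|h].
    + apply LB_G; auto.
    + apply (TG x t t'); auto.
Qed.
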